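(* Let $A\in\mathbb{R}^{m\times m}$ and $C\in\mathbb{R}^{n\times n}$ be symmetric and $B\in\mathbb{R}^{n\times m}$, with $\mu I\preceq A\preceq LI$ for some $0<\mu\le L$, $\|B\|_2\le L$, $\|C\|_2\le L$, and $C+BA^{-1}B^\top\succ0$. Let $r>0$ and $M=\begin{pmatrix}-C & -B\\ rB^\top & -rA\end{pmatrix}$. Let $\lambda=\lambda_0+i\lambda_1$ ($\lambda_0,\lambda_1\in\mathbb{R}$) be any eigenvalue of $M$. Then: (1) $|\lambda_1|\le\sqrt{r}\,L$; (2) if $\lambda_1\neq0$, then $\lambda_0\le-\frac{\mu(r-\kappa)}{2}$; (3) if $r\ge1$, then $\lambda_0^2+\lambda_1^2\le\|M\|_2^2\le4r^2L^2$; (4) if $r>\kappa$ and $\lambda_1=0$, then $\lambda_0\le-\mu_x$; (5) if $r>\kappa$ (and $\mu_x>0$), then $\lambda_0<0$.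
   Context: $\kappa=L/\mu$ and $\mu_x=\min\{L,\lambda_{\min}(C+BA^{-1}B^\top)\}$. *)

(* Defs.v *)
From HB Require Import structures.
From mathcomp Require Import all_boot all_order all_algebra.
From mathcomp Require Import classical_sets reals.
From mathcomp Require Export complex.
Set Implicit Arguments.
Unset Strict Implicit.
Unset Printing Implicit Defensive.
Import Order.TTheory GRing.Theory Num.Theory.
Local Open Scope ring_scope.
Local Open Scope classical_set_scope.

Definition vnorm2 {R : realType} {k : nat} (v : 'cV[R]_k) : R :=
  Num.sqrt (\sum_(i < k) v i 0 ^+ 2).

Definition opnorm2 {R : realType} {p q : nat} (M : 'M[R]_(p, q)) : R :=
  sup [set vnorm2 (M *m x) | x in [set x : 'cV[R]_q | vnorm2 x = 1]].

Definition psd {R : realType} {k : nat} (S : 'M[R]_k) : Prop :=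
  forall x : 'cV[R]_k, 0 <= (x^T *m S *m x) 0 0.
Definition pd {R : realType} {k : nat} (S : 'M[R]_k) : Prop :=
  forall x : 'cV[R]_k, x != 0 -> 0 < (x^T *m S *m x) 0 0.

Definition lambda_min {R : realType} {k : nat} (S : 'M[R]_k) : R :=
  inf [set a : R | eigenvalue S a].

Definition cplx_mx {R : realType} {p q : nat} (M : 'M[R]_(p, q)) : 'M[R[i]]_(p, q) :=
  map_mx (fun x : R => (x%:C)%C) M.

(* Main.v *)
Require Import Defs.
From HB Require Import structures.
From mathcomp Require Import all_boot all_order all_algebra.
From mathcomp Require Import classical_sets boolp reals complex.
From mathcomp Require Import sesquilinear spectral.
From mathcomp Require Import ring lra.
Import Order.TTheory GRing.Theory Num.Theory.
Local Open Scope ring_scope.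
Set Implicit Arguments.
Unset Strict Implicit.
Unset Printing Implicit Defensive.

Definition dot {R : realType} {k : nat} (u v : 'cV[R]_k) : R := (u^T *m v) 0 0.
Definition N2 {R : realType} {k : nat} (u : 'cV[R]_k) : R := dot u u.

Lemma dotE {R : realType} k (u v : 'cV[R]_k) : dot u v = \sum_i u i 0 * v i 0.
Proof. by rewrite /dot mxE; apply: eq_bigr => i _; rewrite mxE. Qed.

Lemma dotC {R : realType} k (u v : 'cV[R]_k) : dot u v = dot v u.
Proof. by rewrite !dotE; apply: eq_bigr => i _; rewrite mulrC. Qed.

Lemma dotDr {R : realType} k (u v w : 'cV[R]_k) : dot u (v + w) = dot u v + dot u w.
Proof. by rewrite /dot mulmxDr mxE. Qed.
Lemma dotZr {R : realType} k (u v : 'cV[R]_k) a : dot u (a *: v) = a * dot u v.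
Proof. by rewrite /dot -scalemxAr mxE. Qed.
Lemma dotNr {R : realType} k (u v : 'cV[R]_k) : dot u (- v) = - dot u v.
Proof. by rewrite /dot mulmxN mxE. Qed.
Lemma dotBr {R : realType} k (u v w : 'cV[R]_k) : dot u (v - w) = dot u v - dot u w.
Proof. by rewrite dotDr dotNr. Qed.
Lemma dotDl {R : realType} k (u v w : 'cV[R]_k) : dot (v + w) u = dot v u + dot w u.
Proof. by rewrite dotC dotDr !(dotC u). Qed.
Lemma dotZl {R : realType} k (u v : 'cV[R]_k) a : dot (a *: v) u = a * dot v u.
Proof. by rewrite dotC dotZr dotC. Qed.
Lemma dotNl {R : realType} k (u v : 'cV[R]_k) : dot (- v) u = - dot v u.
Proof. by rewrite dotC dotNr dotC. Qed.
Lemma dotBl {R : realType} k (u v w : 'cV[R]_k) : dot (v - w) u = dot v u - dot w u.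
Proof. by rewrite dotDl dotNl. Qed.
Lemma dot0r {R : realType} k (u : 'cV[R]_k) : dot u 0 = 0.
Proof. by rewrite /dot mulmx0 mxE. Qed.
Lemma dot0l {R : realType} k (u : 'cV[R]_k) : dot 0 u = 0.
Proof. by rewrite dotC dot0r. Qed.
Lemma dotMr {R : realType} p q (P : 'M[R]_(p, q)) u v : dot u (P *m v) = dot (P^T *m u) v.
Proof. by rewrite /dot trmx_mul trmxK mulmxA. Qed.

Lemma N2E {R : realType} k (u : 'cV[R]_k) : N2 u = \sum_i u i 0 ^+ 2.
Proof. by rewrite /N2 dotE; apply: eq_bigr => i _; rewrite expr2. Qed.
Lemma N2_ge0 {R : realType} k (u : 'cV[R]_k) : 0 <= N2 u.
Proof. by rewrite N2E sumr_ge0 // => i _; rewrite sqr_ge0. Qed.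
Lemma N2_eq0 {R : realType} k (u : 'cV[R]_k) : N2 u = 0 -> u = 0.
Proof.
rewrite N2E => /eqP; rewrite psumr_eq0 => [/allP H|i _]; last by rewrite sqr_ge0.
apply/matrixP => i j; rewrite ord1 mxE; apply/eqP.
by have := H i (mem_index_enum _); rewrite sqrf_eq0.
Qed.
Lemma N2_gt0 {R : realType} k (u : 'cV[R]_k) : u != 0 -> 0 < N2 u.
Proof.
move=> u0; rewrite lt_neqAle N2_ge0 andbT; apply/eqP => H.
by move: u0; rewrite (N2_eq0 (esym H)) eqxx.
Qed.
Lemma formE {R : realType} k (S : 'M[R]_k) x : (x^T *m S *m x) 0 0 = dot x (S *m x).
Proof. by rewrite /dot mulmxA. Qed.



Local Open Scope classical_set_scope.
Local Open Scope ring_scope.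

Lemma quad_disc {R : realType} (a b c : R) : 0 <= c ->
  (forall t, 0 <= a + 2 * b * t + c * t ^+ 2) -> b ^+ 2 <= a * c.
Proof.
move=> c0 H; have a0 : 0 <= a by have := H 0; rewrite !mulr0 expr0n /= mulr0 !addr0.
have [cpos|] := ltP 0 c.
  have := H (- b / c).
  have -> : a + 2 * b * (- b / c) + c * (- b / c) ^+ 2 = a - b ^+ 2 / c.
    by field; rewrite gt_eqF.
  rewrite subr_ge0 ler_pdivrMr //.
move=> c_le0; have c00 : c = 0 by apply/eqP; rewrite eq_le c_le0 c0.
rewrite c00 mulr0; have [->|b0] := eqVneq b 0; first by rewrite expr0n.
have := H (- (a + 1) / (2 * b)).
have -> : a + 2 * b * (- (a + 1) / (2 * b)) + c * (- (a + 1) / (2 * b)) ^+ 2 = -1.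
  by rewrite c00 mul0r addr0; field; rewrite b0.
by rewrite ler0N1.
Qed.

Lemma psd_cs {R : realType} k (P : 'M[R]_k) : P^T = P ->
  (forall z, 0 <= dot z (P *m z)) -> forall u v,
  dot u (P *m v) ^+ 2 <= dot u (P *m u) * dot v (P *m v).
Proof.
move=> Ps Pp u v; apply: quad_disc => [//|t].
have := Pp (u + t *: v).
rewrite mulmxDr -scalemxAr dotDl dotZl !dotDr !dotZr.
have -> : dot v (P *m u) = dot u (P *m v) by rewrite dotMr Ps dotC.
suff -> : dot u (P *m u) + t * dot u (P *m v) + t * (dot u (P *m v) + t * dot v (P *m v)) =
  dot u (P *m u) + 2 * dot u (P *m v) * t + dot v (P *m v) * t ^+ 2 by [].
ring.
Qed.

Lemma cs {R : realType} k (u v : 'cV[R]_k) : dot u v ^+ 2 <= N2 u * N2 v.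
Proof.
have := @psd_cs R k 1%:M (trmx1 _ _) _ u v; rewrite !mul1mx; apply.
by move=> z; rewrite mul1mx N2_ge0.
Qed.

Lemma N2_mul_bound {R : realType} p q (P : 'M[R]_(p, q)) x :
  N2 (P *m x) <= (\sum_i \sum_j P i j ^+ 2) * N2 x.
Proof.
rewrite N2E mulr_suml; apply: ler_sum => i _.
have -> : (P *m x) i 0 = dot (row i P)^T x.
  by rewrite dotE mxE; apply: eq_bigr => j _; rewrite !mxE.
have -> : \sum_j P i j ^+ 2 = N2 (row i P)^T.
  by rewrite N2E; apply: eq_bigr => j _; rewrite !mxE.
exact: cs.
Qed.

Lemma vnorm2E {R : realType} k (u : 'cV[R]_k) : vnorm2 u = Num.sqrt (N2 u).
Proof. by rewrite /vnorm2 N2E. Qed.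

Lemma opnorm_has_ub {R : realType} p q (P : 'M[R]_(p, q)) :
  has_ubound [set vnorm2 (P *m x) | x in [set x : 'cV[R]_q | vnorm2 x = 1]].
Proof.
exists (Num.sqrt (\sum_i \sum_j P i j ^+ 2)) => _ [x /= x1 <-].
rewrite vnorm2E ler_sqrt; last by rewrite sumr_ge0 // => i _; rewrite sumr_ge0 // => j _; rewrite sqr_ge0.
have Nx : N2 x = 1.
  by move: x1; rewrite vnorm2E => /eqP; rewrite -[X in _ == X]sqrtr1 eqr_sqrt ?N2_ge0 // => /eqP.
 have := N2_mul_bound P x; rewrite Nx mulr1 //.
Qed.

Lemma opnorm_ge0 {R : realType} p q (P : 'M[R]_(p, q)) : 0 <= opnorm2 P.
Proof.
rewrite /opnorm2.
set E := (X in sup X).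
have [[e Ee]|E0] := pselect (E !=set0).
  apply: (le_trans _ (ub_le_sup (opnorm_has_ub P) Ee)).
  by case: Ee => x _ <-; rewrite sqrtr_ge0.
have -> : E = set0 by apply/seteqP; split => // e Ee; exfalso; apply: E0; exists e.
by rewrite sup0.
Qed.

Lemma opnorm_ub {R : realType} p q (P : 'M[R]_(p, q)) x :
  N2 (P *m x) <= opnorm2 P ^+ 2 * N2 x.
Proof.
have [->|x0] := eqVneq x 0; first by rewrite mulmx0 /N2 !dot0r mulr0.
have Nx := N2_gt0 x0; set s := Num.sqrt (N2 x).
have s0 : 0 < s by rewrite sqrtr_gt0.
have Ex : [set vnorm2 (P *m x) | x in [set x : 'cV[R]_q | vnorm2 x = 1]]
   (vnorm2 (P *m (s^-1 *: x))).
  exists (s^-1 *: x) => //=.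
  rewrite vnorm2E /N2 dotZl dotZr mulrA -expr2 exprVn sqr_sqrtr ?N2_ge0 //.
  by rewrite mulVf ?sqrtr1 // gt_eqF.
have := ub_le_sup (opnorm_has_ub P) Ex; rewrite -/(opnorm2 P).
rewrite vnorm2E -scalemxAr /N2 dotZl dotZr mulrA -expr2 exprVn.
move=> H.
have H2 : s ^- 2 * N2 (P *m x) <= opnorm2 P ^+ 2.
  move: H; rewrite -(ler_pXn2r (n := 2) isT (sqrtr_ge0 _) (opnorm_ge0 P)).
  by rewrite sqr_sqrtr // mulr_ge0 // ?invr_ge0 ?exprn_ge0 // ?sqrtr_ge0 // N2_ge0.
rewrite /s sqr_sqrtr ?N2_ge0 // in H2.
by rewrite -ler_pdivrMr // mulrC.
Qed.

Lemma opnorm_le {R : realType} p q (P : 'M[R]_(p, q)) c : 0 <= c ->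
  (forall x, N2 (P *m x) <= c ^+ 2 * N2 x) -> opnorm2 P <= c.
Proof.
move=> c0 H; rewrite /opnorm2; set E := (X in sup X).
have [[e Ee]|E0] := pselect (E !=set0); last first.
  have -> : E = set0 by apply/seteqP; split => // e Ee; exfalso; apply: E0; exists e.
  by rewrite sup0.
apply: ge_sup; first by exists e.
move=> _ [x /= x1 <-].
have Nx : N2 x = 1.
  by move: x1; rewrite vnorm2E => /eqP; rewrite -[X in _ == X]sqrtr1 eqr_sqrt ?N2_ge0 // => /eqP.
rewrite vnorm2E -(ger0_norm c0) -sqrtr_sqr ler_sqrt ?sqr_ge0 //.
by have := H x; rewrite Nx mulr1.
Qed.

Lemma opnorm_tr {R : realType} p q (P : 'M[R]_(p, q)) x :
  N2 (P^T *m x) <= opnorm2 P ^+ 2 * N2 x.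
Proof.
set w := P^T *m x.
have h1 : N2 w = dot x (P *m w) by rewrite /N2 dotMr.
have h2 := cs x (P *m w).
have h3 := opnorm_ub P w.
have h0 := N2_ge0 w; have hx := N2_ge0 x.
have ho := opnorm_ge0 P.
rewrite -h1 in h2.
have [w0|wpos] := eqVneq (N2 w) 0; first by rewrite w0 mulr_ge0 ?sqr_ge0.
have : N2 w ^+ 2 <= N2 x * (opnorm2 P ^+ 2 * N2 w).
  by apply: (le_trans h2); rewrite ler_wpM2l.
rewrite mulrA expr2 [_ * N2 w]mulrC ler_pM2r; first by rewrite mulrC.
by rewrite lt_neqAle eq_sym wpos h0.
Qed.

Local Close Scope classical_set_scope.

Local Open Scope sesquilinear_scope.

Lemma rayleigh (R : realType) k (S : 'M[R]_k) (x : 'cV[R]_k) : S^T = S -> x != 0 ->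
  exists2 e, eigenvalue S e & e * N2 x <= dot x (S *m x).
Proof.
move=> Ss x0.
pose Sc : 'M[R[i]]_k := map_mx (real_complex R) S.
have Sh : Sc \is hermsymmx.
  apply: realsym_hermsym.
    apply/is_hermitianmxP; rewrite expr0 scale1r map_mx_id //.
    by rewrite /Sc map_trmx Ss.
  by apply/mxOverP => i j; rewrite mxE; apply/complex_realP; eexists.
have := hermitian_normalmx Sh => /orthomx_spectralP.
set P := spectralmx Sc; set d := spectral_diag Sc => SE.
have Pu : P \is unitarymx := spectral_unitarymx Sc.
have dreal := hermitian_spectral_diag_real Sh; rewrite -/d in dreal.
have iP : invmx P = P ^t Num.conj := invmx_unitary Pu.
have PPu : P^t Num.conj *m P = 1%:M by rewrite -iP mulVmx // unitarymx_unit.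
have k0 : (0 < k)%N.
  case: k S x Ss x0 {Sc Sh SE P Pu dreal d iP PPu} => // S x _.
  by rewrite (_ : x = 0) ?eqxx //; apply/matrixP => -[].
pose i0 : 'I_k := Ordinal k0.
case: (@arg_minP _ R _ i0 xpredT (fun i => complex.Re (d 0 i)) isT) => j _ jmin.
pose e := complex.Re (d 0 j).
have dR i : d 0 i = (real_complex R) (complex.Re (d 0 i)) by rewrite RRe_real //; exact: (mxOverP dreal).
exists e.
  have hM : (S - e%:M) ^ (real_complex R) = invmx P *m (diag_mx d - ((real_complex R) e)%:M) *m P.
    rewrite map_mxB /= map_scalar_mx -/Sc SE mulmxBr mulmxBl.
    by rewrite mul_mx_scalar -scalemxAl mulVmx ?unitarymx_unit // scalemx1.
  have hdet : (real_complex R) (\det (S - e%:M)) = 0.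
    rewrite -det_map_mx hM !det_mulmx.
    have -> : diag_mx d - ((real_complex R) e)%:M = diag_mx (\row_i (d 0 i - (real_complex R) e)).
      apply/matrixP => a b; rewrite !mxE; case: eqP => [->|_]; by rewrite ?mulr1n ?mulr0n ?subr0.
    rewrite det_diag (bigD1 j) //= mxE (dR j) /e subrr mul0r.
    by rewrite mulr0 mul0r.
  have /det0P [v v0 vE] : \det (S - e%:M) == 0.
    by move: hdet; move=> /eqP; rewrite fmorph_eq0.
  apply/eigenvalueP; exists v => //.
  by apply/eqP; move: vE; rewrite mulmxBr mul_mx_scalar => /eqP; rewrite subr_eq0.
have mE (A : 'M[R]_1) : real_complex R (A 0 0) = (A ^ real_complex R) 0 0 by rewrite mxE.
pose xc := x ^ (real_complex R).
pose z := P *m xc.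
have xcr : xc ^ Num.conj = xc.
  by apply/matrixP => a b; rewrite !mxE conj_Creal //; apply/complex_realP; eexists.
have hz : xc^T *m P ^t* = (map_mx Num.conj z)^T.
  rewrite /z map_mxM trmx_mul; congr (_ *m _).
  congr (_^T); apply/matrixP => a b; rewrite !mxE; symmetry; apply: conj_Creal.
  by apply/complex_realP; eexists.
  by apply/matrixP => a b; rewrite !mxE.

have F1 : (real_complex R) (dot x (S *m x)) = \sum_i (z i 0)^* * d 0 i * z i 0.
  rewrite /dot mE map_mxM -map_trmx /= map_mxM -/Sc -/xc SE.
  rewrite !mulmxA iP hz -mulmxA mxE; apply: eq_bigr => a _.
  by rewrite mul_mx_diag !mxE.
have F2 : (real_complex R) (N2 x) = \sum_i (z i 0)^* * z i 0.
  rewrite /N2 /dot mE map_mxM -map_trmx /= -/xc.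
  rewrite -[X in _ *m X]mul1mx -PPu !mulmxA hz -mulmxA mxE.
  by apply: eq_bigr => a _; rewrite !mxE.
rewrite -lecR rmorphM /= F1 F2 mulr_sumr; apply: ler_sum => a _.
have -> : (z a 0)^* * d 0 a * z a 0 = d 0 a * ((z a 0)^* * z a 0) by ring.
apply: ler_wpM2r.
  by rewrite mulrC mul_conjC_ge0.
by rewrite dR lecR jmin.
Qed.

Local Close Scope sesquilinear_scope.

Lemma psd_form {R : realType} k (S : 'M[R]_k) : psd S -> forall x, 0 <= dot x (S *m x).
Proof. by move=> H x; rewrite -formE. Qed.

Lemma form_shift {R : realType} k (S : 'M[R]_k) (c : R) x :
  dot x ((S - c%:M) *m x) = dot x (S *m x) - c * N2 x.
Proof. by rewrite mulmxBl mul_scalar_mx dotBr dotZr. Qed.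

Lemma form_shift' {R : realType} k (S : 'M[R]_k) (c : R) x :
  dot x ((c%:M - S) *m x) = c * N2 x - dot x (S *m x).
Proof. by rewrite mulmxBl mul_scalar_mx dotBr dotZr. Qed.

Lemma sym_eig_col {R : realType} k (S : 'M[R]_k) (v : 'rV[R]_k) e :
  S^T = S -> v *m S = e *: v -> S *m v^T = e *: v^T.
Proof. by move=> Ss H; rewrite -{1}Ss -trmx_mul H linearZ. Qed.

Lemma lmin_le {R : realType} k (S : 'M[R]_k) x : S^T = S -> pd S -> x != 0 ->
  lambda_min S * N2 x <= dot x (S *m x).
Proof.
move=> Ss Sp x0; have [e eE le] := rayleigh Ss x0.
apply: le_trans le; apply: ler_wpM2r; first exact: N2_ge0.
apply: ge_inf => //; exists 0 => e' /eigenvalueP [v vE v0].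
have w0 : v^T != 0 by rewrite -[0]trmx0 (inj_eq (@trmx_inj _ _ _)).
have := Sp _ w0; rewrite formE (sym_eig_col Ss vE) dotZr.
have := N2_gt0 w0; rewrite /N2 => hp hq.
by apply/ltW; rewrite -(pmulr_lgt0 _ hp).
Qed.

Lemma A_lb {R : realType} k (A : 'M[R]_k) mu : psd (A - mu%:M) ->
  forall y, mu * N2 y <= dot y (A *m y).
Proof. by move=> H y; have := psd_form H y; rewrite form_shift subr_ge0. Qed.

Lemma A_ub {R : realType} k (A : 'M[R]_k) L : psd (L%:M - A) ->
  forall y, dot y (A *m y) <= L * N2 y.
Proof. by move=> H y; have := psd_form H y; rewrite form_shift' subr_ge0. Qed.

Lemma A_unit {R : realType} k (A : 'M[R]_k) mu : A^T = A -> 0 < mu -> psd (A - mu%:M) ->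
  A \in unitmx.
Proof.
move=> As mu0 H; rewrite unitmxE unitfE; apply/negP => /det0P [v v0 vA].
have w0 : v^T != 0 by rewrite -[0]trmx0 (inj_eq (@trmx_inj _ _ _)).
have := A_lb H v^T; rewrite (@sym_eig_col _ _ _ _ 0) // ?scale0r ?vA // dot0r.
have := N2_gt0 w0 => hp h. have : 0 < mu * N2 v^T by rewrite mulr_gt0.
by rewrite ltNge h.
Qed.

Lemma A_inv {R : realType} k (A : 'M[R]_k) mu : A^T = A -> 0 < mu -> psd (A - mu%:M) ->
  forall y, 0 <= dot y (invmx A *m y) /\ mu * dot y (invmx A *m y) <= N2 y.
Proof.
move=> As mu0 H y; have Au := A_unit As mu0 H.
set w := invmx A *m y.
have yw : y = A *m w by rewrite /w mulKVmx.
have t1 : dot y w = dot w (A *m w) by rewrite {1}yw dotC.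
have h1 := A_lb H w.
have h2 := cs y w.
have hw := N2_ge0 w; have hy := N2_ge0 y.
rewrite t1 in h2 *.
set t := dot w (A *m w) in h1 h2 *.
have t0 : 0 <= t by apply: le_trans h1; rewrite mulr_ge0 // ltW.
split => //.
have : mu * t ^+ 2 <= N2 y * t.
  apply: le_trans (_ : mu * (N2 y * N2 w) <= _).
    by apply: ler_wpM2l => //; exact: ltW.
  by rewrite mulrCA; apply: ler_wpM2l.
have [->|tp] := eqVneq t 0; first by move=> _; rewrite mulr0.
have tpos : 0 < t by rewrite lt_neqAle eq_sym tp t0.
by rewrite expr2 mulrA ler_pM2r.
Qed.

Lemma A_norm {R : realType} k (A : 'M[R]_k) mu L : A^T = A -> 0 < mu -> psd (A - mu%:M) ->
  psd (L%:M - A) -> forall y, N2 (A *m y) <= L ^+ 2 * N2 y.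
Proof.
move=> As mu0 H1 H2 y.
have Ap : forall z, 0 <= dot z (A *m z).
  by move=> z; apply: le_trans (A_lb H1 z); rewrite mulr_ge0 ?N2_ge0 // ltW.
set w := A *m y.
have := psd_cs As Ap y w.
have -> : dot y (A *m w) = N2 w by rewrite /N2 dotMr As.
have h1 := A_ub H2 y; have h2 := A_ub H2 w.
have hw := N2_ge0 w; have hy := N2_ge0 y.
have a1 := Ap y; have a2 := Ap w.
move=> h.
have : N2 w ^+ 2 <= L ^+ 2 * N2 y * N2 w.
  apply: le_trans h _.
  have -> : L ^+ 2 * N2 y * N2 w = (L * N2 y) * (L * N2 w) by ring.
  by apply: ler_pM.
have [->|wp] := eqVneq (N2 w) 0; first by rewrite mulr_ge0 ?sqr_ge0.
have wpos : 0 < N2 w by rewrite lt_neqAle eq_sym wp hw.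
by rewrite expr2 ler_pM2r.
Qed.

Lemma op_sq {R : realType} p q (P : 'M[R]_(p, q)) L : opnorm2 P <= L ->
  forall x, N2 (P *m x) <= L ^+ 2 * N2 x.
Proof.
move=> H x; apply: le_trans (opnorm_ub P x) _; apply: ler_wpM2r; first exact: N2_ge0.
by rewrite ler_pXn2r // ?nnegrE ?opnorm_ge0 // (le_trans (opnorm_ge0 P)).
Qed.

Lemma op_sqT {R : realType} p q (P : 'M[R]_(p, q)) L : opnorm2 P <= L ->
  forall x, N2 (P^T *m x) <= L ^+ 2 * N2 x.
Proof.
move=> H x; apply: le_trans (opnorm_tr P x) _; apply: ler_wpM2r; first exact: N2_ge0.
by rewrite ler_pXn2r // ?nnegrE ?opnorm_ge0 // (le_trans (opnorm_ge0 P)).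
Qed.

Lemma bil_bound {R : realType} p q (P : 'M[R]_(p, q)) L : opnorm2 P <= L ->
  forall u v, dot u (P *m v) ^+ 2 <= L ^+ 2 * N2 u * N2 v.
Proof.
move=> H u v; apply: le_trans (cs u (P *m v)) _.
rewrite -mulrA [L ^+ 2 * _]mulrCA ler_wpM2l ?N2_ge0 //; exact: op_sq.
Qed.

Lemma C_lb {R : realType} k (C : 'M[R]_k) L : 0 <= L -> opnorm2 C <= L ->
  forall x, - (L * N2 x) <= dot x (C *m x).
Proof.
move=> L0 H x; have := bil_bound H x x; have := N2_ge0 x => hx h.
have : (dot x (C *m x)) ^+ 2 <= (L * N2 x) ^+ 2 by rewrite exprMn expr2 mulrA.
move=> h2.
have : `|dot x (C *m x)| <= L * N2 x.
  rewrite -(ler_pXn2r (n := 2)) ?nnegrE ?mulr_ge0 //.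
  by rewrite real_normK // num_real.
by rewrite ler_norml => /andP[].
Qed.



Lemma Re_sum {R : realType} (I : Type) (r : seq I) (F : I -> R[i]) :
  complex.Re (\sum_(i <- r) F i) = \sum_(i <- r) complex.Re (F i).
Proof.
elim: r => [|x r IH]; first by rewrite !big_nil.
by rewrite !big_cons -IH; case: (F x) => ? ?; case: (\sum_(j <- r) F j).
Qed.

Lemma Im_sum {R : realType} (I : Type) (r : seq I) (F : I -> R[i]) :
  complex.Im (\sum_(i <- r) F i) = \sum_(i <- r) complex.Im (F i).
Proof.
elim: r => [|x r IH]; first by rewrite !big_nil.
by rewrite !big_cons -IH; case: (F x) => ? ?; case: (\sum_(j <- r) F j).
Qed.

Lemma eig_extract {R : realType} p (M : 'M[R]_p) (l0 l1 : R) :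
  eigenvalue (cplx_mx M) (l0 +i* l1)%C ->
  exists a b : 'cV[R]_p, [/\ (a != 0) || (b != 0),
     M^T *m a = l0 *: a - l1 *: b & M^T *m b = l1 *: a + l0 *: b].
Proof.
move=> /eigenvalueP [v vE v0].
exists (\col_i complex.Re (v 0 i)), (\col_i complex.Im (v 0 i)); split.
- apply: contraNT v0; rewrite negb_or !negbK => /andP[/eqP ha /eqP hb].
  apply/eqP/matrixP => i j; rewrite ord1 !mxE.
  move/matrixP/(_ j 0): ha; move/matrixP/(_ j 0): hb.
  rewrite !mxE; case: (v 0 j) => a b /= -> ->; by [].
- apply/matrixP => j k; rewrite ord1 !mxE.
  move/matrixP/(_ 0 j)/(congr1 (@complex.Re _)): (vE); rewrite !mxE Re_sum.
  have -> : complex.Re ((l0 +i* l1)%C * v 0 j) = l0 * complex.Re (v 0 j) - l1 * complex.Im (v 0 j).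
    by case: (v 0 j) => a b /=.
  move=> <-; apply: eq_bigr => i _; rewrite !mxE.
  by case: (v 0 i) => a b /=; rewrite mulr0 subr0 mulrC.
- apply/matrixP => j k; rewrite ord1 !mxE.
  move/matrixP/(_ 0 j)/(congr1 (@complex.Im _)): (vE); rewrite !mxE Im_sum.
  have -> : complex.Im ((l0 +i* l1)%C * v 0 j) = l1 * complex.Re (v 0 j) + l0 * complex.Im (v 0 j).
    by case: (v 0 j) => a b /=; rewrite addrC.
  move=> <-; apply: eq_bigr => i _; rewrite !mxE.
  by case: (v 0 i) => a b /=; rewrite mulr0 add0r mulrC.
Qed.



Lemma scalar_real {R : realType} (mu L r lm lam c p al t X Y : R) :
  0 < mu -> mu <= L -> 0 < r -> L < r * mu ->
  - (L * X) <= c -> c <= L * X -> mu * Y <= al -> 0 <= t -> mu * t <= Y ->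
  0 <= X -> 0 <= Y -> 0 < X + Y ->
  - c + r * p = lam * X -> - p - r * al = lam * Y ->
  (0 < X -> 0 < c + lam ^+ 2 * t + 2 * lam * r * Y + r ^+ 2 * al) ->
  (0 < X -> lm * X <= c + lam ^+ 2 * t + 2 * lam * r * Y + r ^+ 2 * al) ->
  lam < 0 /\ lam <= - Num.min L lm.
Proof.
move=> mu0 muL r0 rmu cl cu al0 t0 tY X0 Y0 XY h1 h2 Sp Ray.
have hp : p = - r * al - lam * Y by lra.
have hc : c = - r ^+ 2 * al - r * lam * Y - lam * X.
  by rewrite hp in h1; nra.
have hS : c + lam ^+ 2 * t + 2 * lam * r * Y + r ^+ 2 * al = - lam * X + r * lam * Y + lam ^+ 2 * t.
  by rewrite hc; ring.
rewrite hS in Sp Ray.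
have minL : Num.min L lm <= L by rewrite ge_min lexx.
have minl : Num.min L lm <= lm by rewrite ge_min lexx orbT.
have [lam_le|lam_gt] := lerP lam (- (r * mu)).
  split; first by nra.
  by lra.
have rl : 0 < r * mu + lam by lra.
have Xp : 0 < X.
  rewrite lt_neqAle X0 andbT; apply/eqP => X00.
  have Yp : 0 < Y by lra.
  have c0 : c = 0 by rewrite -X00 mulr0 in cl cu; lra.
  have : r * al + lam * Y = 0.
    have : r * (r * al + lam * Y) = 0 by rewrite hc -X00 in c0; nra.
    by move/eqP; rewrite mulf_eq0 gt_eqF //= => /eqP.
  have : (r * mu + lam) * Y <= r * al + lam * Y by nra.
  nra.
have Spos := Sp Xp.
have lneg : lam < 0.
  rewrite ltNge; apply/negP => lam0.
  have [lz|lp] := eqVneq lam 0.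
    by move: Spos; rewrite lz; lra.
  have lpos : 0 < lam by rewrite lt_neqAle eq_sym lp lam0.
  have e1 : X < r * Y + lam * t.
    have : lam * X < lam * (r * Y + lam * t) by nra.
    by rewrite ltr_pM2l.
  have e2 : mu * X < (r * mu + lam) * Y by nra.
  have e3 : r * (r * mu + lam) * Y <= (L - lam) * X by nra.
  have [Yz|Ypos] := eqVneq Y 0.
    by rewrite Yz mulr0 in e2; nra.
  have Yp : 0 < Y by rewrite lt_neqAle eq_sym Ypos Y0.
  have Ll : 0 < L - lam by nra.
  have e4 : mu * (r * (r * mu + lam) * Y) < mu * ((L - lam) * X) + 0 by nra.
  have e5 : mu * ((L - lam) * X) < (L - lam) * ((r * mu + lam) * Y) by nra.
  have : r * mu * ((r * mu + lam) * Y) < (L - lam) * ((r * mu + lam) * Y) by nra.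
  have ry : 0 < (r * mu + lam) * Y by nra.
  rewrite ltr_pM2r // => h.
  by lra.
split => //.
have hR := Ray Xp.
have SX : - lam * X + r * lam * Y + lam ^+ 2 * t <= - lam * X.
  have h3 : lam * Y <= lam * (mu * t) by nra.
  have h4 : 0 <= mu * (r * Y + lam * t) by nra.
  have h5 : 0 <= r * Y + lam * t.
    by rewrite -(pmulr_rge0 _ mu0).
  nra.
have : lm * X <= - lam * X by lra.
rewrite ler_pM2r // => h.
by lra.
Qed.



Lemma amgm_aux {R : realType} (p q u w s v : R) :
  p ^+ 2 <= u -> q ^+ 2 <= w -> 0 <= s -> 0 <= v -> u * w = s * v ->
  (p - q) ^+ 2 <= u + w + s + v.
Proof.
move=> hp hq s0 v0 e.
have u0 : 0 <= u by apply: le_trans hp; rewrite sqr_ge0.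
have w0 : 0 <= w by apply: le_trans hq; rewrite sqr_ge0.
have h1 : (2 * `|p| * `|q|) ^+ 2 <= (s + v) ^+ 2.
  have : (`|p| * `|q|) ^+ 2 <= u * w.
    rewrite exprMn !real_normK ?num_real //; exact: ler_pM (sqr_ge0 _) (sqr_ge0 _) hp hq.
  rewrite e => h.
  have hsv : 4 * (s * v) <= (s + v) ^+ 2 by have := sqr_ge0 (s - v); lra.
  have -> : (2 * `|p| * `|q|) ^+ 2 = 4 * (`|p| * `|q|) ^+ 2 by ring.
  lra.
have h2 : 2 * `|p| * `|q| <= s + v.
  by move: h1; rewrite ler_pXn2r // nnegrE ?mulr_ge0 ?addr_ge0.
have h3 : - (p * q) <= `|p| * `|q| by rewrite -normrM -normrN; exact: ler_norm.
nra.
Qed.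

Lemma scalar_cplx {R : realType} (mu L r l0 l1 X1 X2 Y1 Y2 d12 e12 c11 c22 c12
   p11 p22 p12 p21 a11 a22 a12 : R) :
  0 < mu -> mu <= L -> 0 < r ->
  - (L * X1) <= c11 -> - (L * X2) <= c22 -> mu * Y1 <= a11 -> mu * Y2 <= a22 ->
  p21 ^+ 2 <= L ^+ 2 * X2 * Y1 -> p12 ^+ 2 <= L ^+ 2 * X1 * Y2 ->
  0 <= X1 -> 0 <= X2 -> 0 <= Y1 -> 0 <= Y2 -> 0 < X1 + X2 + Y1 + Y2 ->
  - c11 + r * p11 = l0 * X1 - l1 * d12 ->
  - c12 + r * p21 = l0 * d12 - l1 * X2 ->
  - c12 + r * p12 = l1 * X1 + l0 * d12 ->
  - c22 + r * p22 = l1 * d12 + l0 * X2 ->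
  - p11 - r * a11 = l0 * Y1 - l1 * e12 ->
  - p12 - r * a12 = l0 * e12 - l1 * Y2 ->
  - p21 - r * a12 = l1 * Y1 + l0 * e12 ->
  - p22 - r * a22 = l1 * e12 + l0 * Y2 ->
  `|l1| <= Num.sqrt r * L /\ (l1 != 0 -> l0 <= - (mu * (r - L / mu) / 2)).
Proof.
move=> mu0 muL r0 c1 c2 a1 a2 b1 b2 X10 X20 Y10 Y20 tot e1 e2 e3 e4 e5 e6 e7 e8.
have L0 : 0 < L by lra.
have hQ1 : r * (p21 - p12) = - l1 * (X1 + X2) by lra.
have hQ2 : p21 - p12 = - l1 * (Y1 + Y2) by lra.
have [l10|l1n] := eqVneq l1 0.
  by split => //; rewrite l10 normr0 mulr_ge0 ?sqrtr_ge0 // ltW.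
have hXY : X1 + X2 = r * (Y1 + Y2).
  have : l1 * (X1 + X2 - r * (Y1 + Y2)) = 0.
    by rewrite hQ2 in hQ1; lra.
  by move/eqP; rewrite mulf_eq0 (negbTE l1n) /= subr_eq0 => /eqP.
have Yp : 0 < Y1 + Y2.
  rewrite lt_neqAle addr_ge0 // andbT; apply/eqP => Y0.
  by rewrite -Y0 mulr0 in hXY; lra.
have Xp : 0 < X1 + X2 by rewrite hXY mulr_gt0.
split.
  have hQ : (p21 - p12) ^+ 2 <= L ^+ 2 * (X1 + X2) * (Y1 + Y2).
    have := @amgm_aux R p21 p12 _ _ (L ^+ 2 * X1 * Y1) (L ^+ 2 * X2 * Y2) b1 b2.
    have -> : L ^+ 2 * (X1 + X2) * (Y1 + Y2) =
      L ^+ 2 * X2 * Y1 + L ^+ 2 * X1 * Y2 + L ^+ 2 * X1 * Y1 + L ^+ 2 * X2 * Y2 by ring.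
    apply; [by rewrite mulr_ge0 // mulr_ge0 // sqr_ge0 | by rewrite mulr_ge0 // mulr_ge0 // sqr_ge0 | ring].
  rewrite hQ2 hXY in hQ.
  have : l1 ^+ 2 <= r * L ^+ 2.
    have : l1 ^+ 2 * (Y1 + Y2) ^+ 2 <= (r * L ^+ 2) * (Y1 + Y2) ^+ 2.
      by move: hQ; rewrite exprMn sqrrN; nra.
    by rewrite ler_pM2r // exprn_gt0.
  move=> h.
  have -> : Num.sqrt r * L = Num.sqrt (r * L ^+ 2) by rewrite sqrtrM ?ltW // sqrtr_sqr ger0_norm // ltW.
  by rewrite -sqrtr_sqr ler_sqrt // mulr_ge0 ?sqr_ge0 // ltW.
move=> _.
have ee : mu * (r - L / mu) = r * mu - L by field; rewrite gt_eqF.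
rewrite ee.
have hs : - (c11 + c22) - r ^+ 2 * (a11 + a22) = 2 * l0 * (X1 + X2) by nra.
have : 2 * l0 * (X1 + X2) <= (L - r * mu) * (X1 + X2) by nra.
move=> h; have : 2 * l0 <= L - r * mu by rewrite -(ler_pM2r Xp).
lra.
Qed.



Lemma N2_col {R : realType} p q (x : 'cV[R]_p) (y : 'cV[R]_q) :
  N2 (col_mx x y) = N2 x + N2 y.
Proof.
rewrite !N2E big_split_ord /=; congr (_ + _); apply: eq_bigr => i _.
  by rewrite col_mxEu.
by rewrite col_mxEd.
Qed.

Lemma dot_tr {R : realType} p q (B : 'M[R]_(p, q)) x y :
  dot y (B^T *m x) = dot x (B *m y).
Proof. by rewrite dotMr trmxK dotC. Qed.

Lemma dot_sym {R : realType} k (S : 'M[R]_k) u v : S^T = S ->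
  dot u (S *m v) = dot v (S *m u).
Proof. by move=> Ss; rewrite dotMr Ss dotC. Qed.

Lemma N2N {R : realType} k (u : 'cV[R]_k) : N2 (- u) = N2 u.
Proof. by rewrite /N2 dotNl dotNr opprK. Qed.

Lemma N2Z {R : realType} k (u : 'cV[R]_k) a : N2 (a *: u) = a ^+ 2 * N2 u.
Proof. by rewrite /N2 dotZl dotZr mulrA expr2. Qed.

Lemma N2D_le {R : realType} k (u v : 'cV[R]_k) : N2 (u + v) <= 2 * N2 u + 2 * N2 v.
Proof.
have h : N2 (u + v) + N2 (u - v) = 2 * N2 u + 2 * N2 v.
  rewrite /N2 !dotDl !dotNl !dotDr !dotNr (dotC v u); ring.
have := N2_ge0 (u - v); lra.
Qed.

Lemma Mt_eq {R : realType} n m (A : 'M[R]_m) (B : 'M[R]_(n, m)) (C : 'M[R]_n) (r : R) :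
  A^T = A -> C^T = C ->
  (block_mx (- C) (- B) (r *: B^T) (- (r *: A)))^T =
  block_mx (- C) (r *: B) (- B^T) (- (r *: A)).
Proof.
move=> As Cs; rewrite tr_block_mx.
by rewrite !linearN /= !linearZ /= trmxK As Cs.
Qed.

Lemma Mt_mul {R : realType} n m (A : 'M[R]_m) (B : 'M[R]_(n, m)) (C : 'M[R]_n) (r : R) (x : 'cV[R]_n) (y : 'cV[R]_m) :
  block_mx (- C) (r *: B) (- B^T) (- (r *: A)) *m col_mx x y =
  col_mx (- (C *m x) + r *: (B *m y)) (- (B^T *m x) - r *: (A *m y)).
Proof. by rewrite mul_block_col !mulNmx -!scalemxAl. Qed.

Lemma M_mul {R : realType} n m (A : 'M[R]_m) (B : 'M[R]_(n, m)) (C : 'M[R]_n) (r : R) (x : 'cV[R]_n) (y : 'cV[R]_m) :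
  block_mx (- C) (- B) (r *: B^T) (- (r *: A)) *m col_mx x y =
  col_mx (- (C *m x) - B *m y) (r *: (B^T *m x) - r *: (A *m y)).
Proof. by rewrite mul_block_col !mulNmx -!scalemxAl. Qed.



Lemma real_case {R : realType} n m (A : 'M[R]_m) (B : 'M[R]_(n, m)) (C : 'M[R]_n)
  (mu L r lam : R) (x : 'cV[R]_n) (y : 'cV[R]_m) :
  A^T = A -> C^T = C -> 0 < mu -> mu <= L ->
  psd (A - mu%:M) -> psd (L%:M - A) -> opnorm2 C <= L ->
  pd (C + B *m invmx A *m B^T) -> 0 < r -> L / mu < r ->
  col_mx x y != 0 ->
  - (C *m x) + r *: (B *m y) = lam *: x ->
  - (B^T *m x) - r *: (A *m y) = lam *: y ->
  lam < 0 /\ lam <= - Num.min L (lambda_min (C + B *m invmx A *m B^T)).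
Proof.
move=> As Cs mu0 muL HA1 HA2 HC Hpd r0 kr xy0 E1 E2.
set S := C + B *m invmx A *m B^T.
have Au := A_unit As mu0 HA1.
have Ss : S^T = S.
  by rewrite /S linearD /= !trmx_mul trmxK trmx_inv As Cs mulmxA.
have L0 : 0 <= L by lra.
have rmu : L < r * mu by rewrite ltr_pdivrMr // in kr.
have e1 := congr1 (dot x) E1; rewrite dotDr dotNr dotZr dotZr -/(N2 x) in e1.
have e2 := congr1 (dot y) E2; rewrite dotDr dotNr dotNr dotZr dotZr -/(N2 y) dot_tr in e2.
have [t0 tY] := A_inv As mu0 HA1 y.
have hBx : B^T *m x = - (lam *: y + r *: (A *m y)).
  by rewrite -E2 subrK opprK.
have Sf : dot x (S *m x) = dot x (C *m x) + lam ^+ 2 * dot y (invmx A *m y)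
    + 2 * lam * r * N2 y + r ^+ 2 * dot y (A *m y).
  rewrite /S mulmxDl dotDr -!mulmxA (dotMr B) hBx mulmxN dotNl dotNr opprK.
  rewrite mulmxDr -!scalemxAr mulKmx //.
  rewrite !dotDl !dotDr !dotZl !dotZr.
  have -> : dot (A *m y) (invmx A *m y) = N2 y by rewrite dotC dotMr As mulKVmx.
  rewrite (dotC (A *m y) y) (dotC y (invmx A *m y)) -/(N2 y) (dotC (invmx A *m y) y).
  ring.
have tot : 0 < N2 x + N2 y by rewrite -N2_col N2_gt0.
apply: (@scalar_real R mu L r _ lam (dot x (C *m x)) (dot x (B *m y)) (dot y (A *m y))
   (dot y (invmx A *m y)) (N2 x) (N2 y)) => //.
- exact: C_lb.
- have := C_lb L0 HC x; have := bil_bound HC x x.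
  move=> h _; have hx := N2_ge0 x.
  have : `|dot x (C *m x)| <= L * N2 x.
    rewrite -(ler_pXn2r (n := 2)) ?nnegrE ?mulr_ge0 //.
    by rewrite real_normK ?num_real // (le_trans h) // exprMn [N2 x ^+ 2]expr2 mulrA.
  by rewrite ler_norml => /andP[].
- exact: A_lb.
- exact: N2_ge0.
- exact: N2_ge0.
- move=> Xp; rewrite -Sf -formE; apply: Hpd.
  by apply/eqP => x0; move: Xp; rewrite x0 /N2 dot0r ltxx.
- move=> Xp; rewrite -Sf; apply: lmin_le => //.
  by apply/eqP => x0; move: Xp; rewrite x0 /N2 dot0r ltxx.
Qed.



Unset Implicit Arguments.
Set Strict Implicit.

Theorem lemma1 (R : realType) (m n : nat)
  (A : 'M[R]_m) (B : 'M[R]_(n, m)) (C : 'M[R]_n) (mu L r : R) (l0 l1 : R) :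
  A^T = A -> C^T = C ->
  0 < mu -> mu <= L ->
  psd (A - mu%:M) -> psd (L%:M - A) ->
  opnorm2 B <= L -> opnorm2 C <= L ->
  pd (C + B *m invmx A *m B^T) ->
  0 < r ->
  let M : 'M[R]_(n + m) := block_mx (- C) (- B) (r *: B^T) (- (r *: A)) in
  let kappa := L / mu in
  let mu_x := Num.min L (lambda_min (C + B *m invmx A *m B^T)) in
  eigenvalue (cplx_mx M) (l0 +i* l1)%C ->
  [/\ `|l1| <= Num.sqrt r * L,
      (l1 != 0 -> l0 <= - (mu * (r - kappa) / 2)),
      (1 <= r -> l0 ^+ 2 + l1 ^+ 2 <= opnorm2 M ^+ 2
                 /\ opnorm2 M ^+ 2 <= 4 * r ^+ 2 * L ^+ 2),
      (kappa < r -> l1 = 0 -> l0 <= - mu_x)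
    & (kappa < r -> l0 < 0)].
Proof.
move=> As Cs mu0 muL HA1 HA2 HB HC Hpd r0 M kappa mu_x eig.
have L0 : 0 < L by lra.
have [a [b [ab0 Ea0 Eb0]]] := eig_extract eig.
have [x1 [y1 ae]] : exists x1 y1, a = col_mx x1 y1.
  by exists (usubmx a), (dsubmx a); rewrite vsubmxK.
have [x2 [y2 be]] : exists x2 y2, b = col_mx x2 y2.
  by exists (usubmx b), (dsubmx b); rewrite vsubmxK.
have Ea := Ea0; have Eb := Eb0.
rewrite /M Mt_eq // ae be Mt_mul !scale_col_mx opp_col_mx add_col_mx in Ea.
rewrite /M Mt_eq // ae be Mt_mul !scale_col_mx add_col_mx in Eb.
case/eq_col_mx: Ea => E1 E2; case/eq_col_mx: Eb => E3 E4.
have RC : kappa < r -> l1 = 0 -> l0 < 0 /\ l0 <= - mu_x.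
  move=> kr l10; rewrite l10 !scale0r ?subr0 ?add0r ?addr0 in E1 E2 E3 E4.
  move: ab0; rewrite ae be; case/orP => nz.
    exact: (real_case As Cs mu0 muL HA1 HA2 HC Hpd r0 kr nz E1 E2).
  exact: (real_case As Cs mu0 muL HA1 HA2 HC Hpd r0 kr nz E3 E4).
have tot : 0 < N2 x1 + N2 x2 + N2 y1 + N2 y2.
  move: ab0; rewrite ae be; case/orP => /N2_gt0; rewrite N2_col;
  have := N2_ge0 x1; have := N2_ge0 x2; have := N2_ge0 y1; have := N2_ge0 y2; lra.
have f1 := congr1 (dot x1) E1; rewrite ?dotDr ?dotNr ?dotZr ?dotBr in f1.
have f2 := congr1 (dot x2) E1; rewrite ?dotDr ?dotNr ?dotZr ?dotBr in f2.
have f3 := congr1 (dot x1) E3; rewrite ?dotDr ?dotNr ?dotZr ?dotBr in f3.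
have f4 := congr1 (dot x2) E3; rewrite ?dotDr ?dotNr ?dotZr ?dotBr in f4.
have f5 := congr1 (dot y1) E2; rewrite ?dotDr ?dotNr ?dotZr ?dotBr in f5.
have f6 := congr1 (dot y2) E2; rewrite ?dotDr ?dotNr ?dotZr ?dotBr in f6.
have f7 := congr1 (dot y1) E4; rewrite ?dotDr ?dotNr ?dotZr ?dotBr in f7.
have f8 := congr1 (dot y2) E4; rewrite ?dotDr ?dotNr ?dotZr ?dotBr in f8.
rewrite (@dot_sym _ _ C x2 x1 Cs) (dotC x2 x1) in f2.
rewrite (dot_tr B x1 y1) in f5.
rewrite (dot_tr B x1 y2) (@dot_sym _ _ A y2 y1 As) (dotC y2 y1) in f6.
rewrite (dot_tr B x2 y1) in f7.
rewrite (dotC x2 x1) in f4.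
rewrite (dot_tr B x2 y2) (dotC y2 y1) in f8.
have [P1 P2] := @scalar_cplx R mu L r l0 l1 _ _ _ _ _ _ _ _ _ _ _ _ _ _ _ _ mu0 muL r0 (C_lb (ltW L0) HC x1) (C_lb (ltW L0) HC x2)
  (A_lb HA1 y1) (A_lb HA1 y2) (bil_bound HB x2 y1) (bil_bound HB x1 y2)
  (N2_ge0 x1) (N2_ge0 x2) (N2_ge0 y1) (N2_ge0 y2) tot f1 f2 f3 f4 f5 f6 f7 f8.
split => //.
- move=> r1.
  have hop : opnorm2 M <= 2 * r * L.
    apply: opnorm_le; first by rewrite !mulr_ge0 // ltW.
    move=> x; rewrite -(vsubmxK x) /M M_mul !N2_col.
    set u1 := usubmx x; set u2 := dsubmx x.
    have h1 := N2D_le (- (C *m u1)) (- (B *m u2)); rewrite !N2N in h1.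
    have h2 := N2D_le (r *: (B^T *m u1)) (- (r *: (A *m u2))); rewrite N2N !N2Z in h2.
    have c1 := op_sq HC u1; have c2 := op_sq HB u2; have c3 := op_sqT HB u1.
    have c4 := A_norm As mu0 HA1 HA2 u2.
    have X1 := N2_ge0 u1; have X2 := N2_ge0 u2.
    have hL : 0 <= L ^+ 2 * (N2 u1 + N2 u2) by rewrite mulr_ge0 ?sqr_ge0 ?addr_ge0.
    have hr : 2 + 2 * r ^+ 2 <= 4 * r ^+ 2 by nra.
    have : N2 (- (C *m u1) - B *m u2) + N2 (r *: (B^T *m u1) - r *: (A *m u2)) <=
      (2 + 2 * r ^+ 2) * (L ^+ 2 * (N2 u1 + N2 u2)) by nra.
    move=> h; apply: (le_trans h).
    have -> : (2 * r * L) ^+ 2 * (N2 u1 + N2 u2) = 4 * r ^+ 2 * (L ^+ 2 * (N2 u1 + N2 u2)) by ring.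
    by apply: ler_wpM2r.
  split; last first.
    have -> : 4 * r ^+ 2 * L ^+ 2 = (2 * r * L) ^+ 2 by ring.
    by rewrite ler_pXn2r // ?nnegrE ?opnorm_ge0 // !mulr_ge0 // ltW.
  have h1 := opnorm_tr M a; rewrite Ea0 in h1.
  have h2 := opnorm_tr M b; rewrite Eb0 in h2.
  have tot2 : 0 < N2 a + N2 b by rewrite ae be !N2_col; lra.
  have e1 : N2 (l0 *: a - l1 *: b) = l0 ^+ 2 * N2 a - 2 * l0 * l1 * dot a b + l1 ^+ 2 * N2 b.
    rewrite /N2 !dotDl !dotNl !dotDr !dotNr !dotZl !dotZr (dotC b a); ring.
  have e2 : N2 (l1 *: a + l0 *: b) = l1 ^+ 2 * N2 a + 2 * l0 * l1 * dot a b + l0 ^+ 2 * N2 b.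
    rewrite /N2 !dotDl !dotDr !dotZl !dotZr (dotC b a); ring.
  rewrite e1 in h1; rewrite e2 in h2.
  have : (l0 ^+ 2 + l1 ^+ 2) * (N2 a + N2 b) <= opnorm2 M ^+ 2 * (N2 a + N2 b) by lra.
  by rewrite ler_pM2r.
- by move=> kr l10; case: (RC kr l10).
- move=> kr; have [l10|l1n] := eqVneq l1 0; first by case: (RC kr l10).
  apply: (le_lt_trans (P2 l1n)); rewrite oppr_lt0 divr_gt0 // mulr_gt0 //.
  by rewrite subr_gt0.
Qed.
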